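(* Let $(p_x,p'_x)$ and $(p_y,p'_y)$ be pairs of positive integers with $|p_x-p'_x|=|p_y-p'_y|=1$, and let $X=\alpha_{(p_x,p'_x)}(Y)$, $Y=\alpha_{(p_y,p'_y)}(Z)$ be finite Sturmian words, $Z$ a finite word. Then the number of original center occurrences in $X$ (equivalently, of original maximal palindrome occurrences in $X$), relative to $X=\alpha_{(p_x,p'_x)}(Y)$, equals $$2(p_x-1)\bigl(|Z|_a\,p_y+|Z|_b\,p'_y\bigr)+2|Z|\,p'_x.$$
   Context: $\alpha_{(p,p')}$ is the morphism $a\mapsto a^pb$, $b\mapsto a^{p'}b$. A Sturmian word is a right-infinite aperiodic word over $\{a,b\}$ with exactly $n+1$ factors of each length $n$; a finite Sturmian word is a finite factor of one. $|W|_l$ is the number of occurrences of letter $l$ in $W$. A center occurrence in a word is an occurrence of one of the factors $a$, $b$, $aa$; each is the center of exactly one maximal palindrome occurrence. Write $Y=y_1\cdots y_m$ and $X=\alpha(y_1)\cdots\alpha(y_m)$ with $\alpha=\alpha_{(p_x,p'_x)}$, $\alpha(y_j)$ occupying positions $s_j+1,\dots,s_j+|\alpha(y_j)|$, $s_j=\sum_{t<j}|\alpha(y_t)|$. The reflection of an occurrence $y_j=a$ (resp. $y_j=b$) is the center (middle letter if odd length, middle two letters if even length) of the run $a^{p_x}$ (resp. $a^{p'_x}$) at positions $s_j+1,\dots,s_j+p_x$ (resp. $s_j+p'_x$); the reflection of an occurrence $y_jy_{j+1}=aa$ is the letter $b$ at position $s_j+p_x+1$. A center occurrence of $X$ is original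 if it is not the reflection of any center occurrence of $Y$. *)

(* Defs.v *)
From HB Require Import structures.
From mathcomp Require Import all_boot.
Set Implicit Arguments. Unset Strict Implicit. Unset Printing Implicit Defensive.

Inductive letter := La | Lb.
Definition letter_eqb (x y : letter) : bool :=
  match x, y with La, La | Lb, Lb => true | _, _ => false end.
Lemma letter_eqP : Equality.axiom letter_eqb.
Proof. by case; case; constructor. Qed.
HB.instance Definition _ := hasDecEq.Build letter letter_eqP.

Definition word := seq letter.

Definition alpha_img (p p' : nat) (l : letter) : word :=
  if l is La then rcons (nseq p La) Lb else rcons (nseq p' La) Lb.
Definition alpha (p p' : nat) (w : word) : word := flatten (map (alpha_img p p') w).

Definition nocc (l : letter) (w : word) : nat := count_mem l w.

Definition iword := nat -> letter.
Definition ifactor (u : iword) (i n : nat) : word := mkseq (fun j => u (i + j)) n.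

Definition nfactors_eq (u : iword) (n k : nat) : Prop :=
  exists s : seq word, uniq s /\ size s = k /\
    forall w, w \in s <-> (size w = n /\ exists i, w = ifactor u i n).

Definition aperiodic (u : iword) : Prop :=
  ~ exists p N, 0 < p /\ forall i, N <= i -> u (i + p) = u i.

Definition sturmian (u : iword) : Prop :=
  aperiodic u /\ forall n, nfactors_eq u n n.+1.

Definition fin_sturmian (w : word) : Prop :=
  exists u, sturmian u /\ exists i, w = ifactor u i (size w).

(* Center occurrences: occurrences of a, b (length 1) or aa (length 2),
   encoded as (0-indexed start position, length). *)
Definition center_occs (w : word) : seq (nat * nat) :=
  [seq (i, 1) | i <- iota 0 (size w)] ++
  [seq (i, 2) | i <- iota 0 (size w).-1 & (nth La w i == La) && (nth La w i.+1 == La)].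

(* s_j (0-indexed j): length of alpha(y_1 ... y_j-th letter excluded). *)
Definition sj (p p' : nat) (Y : word) (j : nat) : nat := size (alpha p p' (take j Y)).

(* Length-1 occurrence at j of letter l: centre of the run a^r (r = p or p')
   occupying 0-indexed positions s_j .. s_j + r - 1: start s_j + (r-1)/2,
   length 1 if r is odd and 2 if r is even.
   Length-2 occurrence aa at j: the letter b at 0-indexed position s_j + p. *)
Definition reflection (p p' : nat) (Y : word) (o : nat * nat) : nat * nat :=
  let j := o.1 in
  if o.2 == 1 then
    let r := if nth La Y j == La then p else p' in
    (sj p p' Y j + r.-1./2, 2 - odd r)
  else (sj p p' Y j + p, 1).

Definition reflections (p p' : nat) (Y : word) : seq (nat * nat) :=
  map (reflection p p' Y) (center_occs Y).

Definition n_original (p p' : nat) (Y : word) : nat :=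
  count (fun o => o \notin reflections p p' Y) (center_occs (alpha p p' Y)).

(* Main.v *)
Require Import Defs.
From HB Require Import structures.
From mathcomp Require Import all_boot zify.
Set Implicit Arguments. Unset Strict Implicit. Unset Printing Implicit Defensive.

Lemma count_notin (T : eqType) (C R : seq T) :
  uniq C -> uniq R -> {subset R <= C} ->
  count (fun o => o \notin R) C = size C - size R.
Proof.
move=> uC uR sRC.
have h := count_predC (mem R) C.
have e : count (mem R) C = size R.
  rewrite -size_filter; apply: perm_size; apply: uniq_perm.
  - exact: filter_uniq.
  - exact: uR.
  move=> x; rewrite mem_filter /=; case xR: (x \in R) => //=; exact: sRC.
rewrite -h e. have -> : count (fun o => o \notin R) C = count (predC (mem R)) C by [].
lia.
Qed.

Lemma mem_map_pair (s : seq nat) (i k c : nat) :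
  ((i, k) \in [seq (x, c) | x <- s]) = (k == c) && (i \in s).
Proof.
apply/mapP/andP => [[x xs [-> ->]]|[/eqP -> ins]]; first by rewrite eqxx.
by exists i.
Qed.

Lemma mem_co (w : word) (i k : nat) :
  ((i, k) \in center_occs w) =
  ((k == 1) && (i < size w)) ||
  [&& k == 2, i.+1 < size w, nth La w i == La & nth La w i.+1 == La].
Proof.
rewrite /center_occs mem_cat !mem_map_pair mem_filter !mem_iota /= !add0n.
have -> : (i < (size w).-1) = (i.+1 < size w) by lia.
by case: (i.+1 < size w); rewrite ?andbT ?andbF.
Qed.

Lemma uniq_co w : uniq (center_occs w).
Proof.
rewrite /center_occs cat_uniq !map_inj_uniq ?iota_uniq ?filter_uniq //;
  try by move=> x y [].
rewrite andbT /=. apply/hasPn => -[i k] /mapP [x _ [_ ->]].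
  by apply/mapP => -[y _ []].
exact: iota_uniq.
Qed.

Definition blk r := rcons (nseq r La) Lb.
Definition rr (p p' : nat) (l : letter) : nat := if l == La then p else p'.
Lemma alpha_imgE p p' l : alpha_img p p' l = blk (rr p p' l).
Proof. by case: l. Qed.

Lemma alpha_cat p p' u v : alpha p p' (u ++ v) = alpha p p' u ++ alpha p p' v.
Proof. by rewrite /alpha map_cat flatten_cat. Qed.
Lemma alpha_cons p p' y u : alpha p p' (y :: u) = alpha_img p p' y ++ alpha p p' u.
Proof. by []. Qed.

Lemma alpha_split p p' j Y : j < size Y ->
  alpha p p' Y = alpha p p' (take j Y) ++ blk (rr p p' (nth La Y j)) ++ alpha p p' (drop j.+1 Y).
Proof.
move=> hj; rewrite -{1}(cat_take_drop j Y) (drop_nth La hj) alpha_cat alpha_cons alpha_imgE //.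
Qed.

Lemma size_blk r : size (blk r) = r.+1.
Proof. by rewrite size_rcons size_nseq. Qed.

Lemma nth_blk r k : nth La (blk r) k = if k < r then La else if k == r then Lb else La.
Proof.
rewrite /blk nth_rcons size_nseq nth_nseq; case: ltngtP => //.
Qed.

Lemma nth_alpha p p' Y j k : j < size Y -> k <= rr p p' (nth La Y j) ->
  nth La (alpha p p' Y) (sj p p' Y j + k) = nth La (blk (rr p p' (nth La Y j))) k.
Proof.
move=> hj hk; rewrite (alpha_split p p' hj) /sj nth_cat ltnNge leq_addr /= addKn.
by rewrite nth_cat size_blk ltnS hk.
Qed.

Lemma size_alpha_ge p p' Y j : j < size Y ->
  sj p p' Y j + (rr p p' (nth La Y j)).+1 <= size (alpha p p' Y).
Proof.
move=> hj; rewrite [in X in _ <= X](alpha_split p p' hj) /sj !size_cat size_blk; lia.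
Qed.

Lemma sj_mono p p' Y j k : j <= k -> sj p p' Y j <= sj p p' Y k.
Proof.
move=> hjk; rewrite /sj -(subnKC hjk) takeD alpha_cat size_cat; lia.
Qed.

Lemma sj_next p p' Y j : j < size Y ->
  sj p p' Y j.+1 = sj p p' Y j + (rr p p' (nth La Y j)).+1.
Proof.
move=> hj; rewrite /sj (take_nth La hj) -cats1 alpha_cat size_cat /alpha /= cats0.
by rewrite alpha_imgE size_blk.
Qed.

Definition aa (w : word) := count (fun i => (nth La w i == La) && (nth La w i.+1 == La)) (iota 0 (size w).-1).

Lemma size_co w : size (center_occs w) = size w + aa w.
Proof. by rewrite /center_occs size_cat !size_map size_iota size_filter. Qed.

Lemma aa_cons x w : aa (x :: w) = ((x == La) && (head Lb w == La)) + aa w.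
Proof.
case: w => [|y w]; first by rewrite /aa /= andbF.
rewrite /aa /= -add1n iotaDl count_map /=. by [].
Qed.

Lemma aa_blk r v : aa (blk r ++ v) = r.-1 + aa v.
Proof.
elim: r => [|r IH]; first by rewrite aa_cons.
rewrite /blk /= aa_cons -/(blk r) IH; case: r {IH} => //= r; lia.
Qed.

Lemma aa_alpha p p' Y : aa (alpha p p' Y) = count_mem La Y * p.-1 + count_mem Lb Y * p'.-1.
Proof.
elim: Y => [|y Y IH] //=; rewrite alpha_cons alpha_imgE aa_blk IH; case: y => /=; rewrite /rr /=; nia.
Qed.

Lemma size_alpha p p' Y : size (alpha p p' Y) = count_mem La Y * p.+1 + count_mem Lb Y * p'.+1.
Proof.
elim: Y => [|y Y IH] //=; rewrite alpha_cons alpha_imgE size_cat size_blk IH; case: y => /=; rewrite /rr /=; nia.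
Qed.

Lemma countLa_alpha p p' Y : count_mem La (alpha p p' Y) = count_mem La Y * p + count_mem Lb Y * p'.
Proof.
elim: Y => [|y Y IH] //=; rewrite alpha_cons alpha_imgE count_cat IH /blk -cats1 count_cat count_nseq;
 case: y => /=; rewrite /rr /=; nia.
Qed.

Lemma countLb_alpha p p' Y : count_mem Lb (alpha p p' Y) = size Y.
Proof.
elim: Y => [|y Y IH] //=; rewrite alpha_cons alpha_imgE count_cat IH /blk -cats1 count_cat count_nseq;
 case: y => /=; rewrite /rr /=; nia.
Qed.

Lemma count_ab (w : word) : count_mem La w + count_mem Lb w = size w.
Proof. by elim: w => [|[] w IH] //=; rewrite -IH ?add0n ?add1n ?addSn ?addnS. Qed.

Lemma rr_pos p p' l : 0 < p -> 0 < p' -> 0 < rr p p' l.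
Proof. by case: l. Qed.

Lemma refl_in p p' Y o : 0 < p -> 0 < p' -> o \in center_occs Y ->
  reflection p p' Y o \in center_occs (alpha p p' Y).
Proof.
move=> hp hp'; case: o => j k; rewrite mem_co => /orP [/andP [/eqP -> hj] | /and4P [/eqP -> hj /eqP hLa _]].
- rewrite /reflection /=.
  have hs := size_alpha_ge p p' hj.
  have hr := rr_pos (nth La Y j) hp hp'.
  change (if nth La Y j == La then p else p') with (rr p p' (nth La Y j)).
  move: hs hr; set r := rr p p' (nth La Y j) => hs hr.
  have hm := modn2 r.
  rewrite -divn2.
  case ho: (odd r) => /=.
  + rewrite mem_co eqxx /=; lia.
  + rewrite mem_co /= -addnS !nth_alpha -/r ?nth_blk; try lia.
    have -> : (r.-1 %/ 2 < r) = true by lia.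
    have -> : ((r.-1 %/ 2).+1 < r) = true by lia.
    rewrite !eqxx andbT /=. lia.
- rewrite /reflection /=.
  have hj' : j < size Y by lia.
  have hs := size_alpha_ge p p' hj'.
  rewrite /rr hLa /= in hs.
  rewrite mem_co eqxx /=; lia.
Qed.

Lemma refl_pos p p' Y j k : 0 < p -> 0 < p' -> (j, k) \in center_occs Y ->
  j < size Y /\
  ((k = 1 /\ sj p p' Y j <= (reflection p p' Y (j, k)).1 < sj p p' Y j + rr p p' (nth La Y j)) \/
   (k = 2 /\ (reflection p p' Y (j, k)).1 = sj p p' Y j + rr p p' (nth La Y j))).
Proof.
move=> hp hp'; rewrite mem_co => /orP [/andP [/eqP -> hj] | /and4P [/eqP -> hj /eqP hLa _]].
- split=> //; left; split=> //; rewrite /reflection /=.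
  have hr := rr_pos (nth La Y j) hp hp'.
  change (if nth La Y j == La then p else p') with (rr p p' (nth La Y j)).
  rewrite -divn2; lia.
- split; first lia. right; split=> //. by rewrite /reflection /= /rr hLa.
Qed.

Lemma refl_bounds p p' Y j k : 0 < p -> 0 < p' -> (j, k) \in center_occs Y ->
  sj p p' Y j <= (reflection p p' Y (j, k)).1 <= sj p p' Y j + rr p p' (nth La Y j).
Proof.
move=> hp hp' h; have [_ [[_ /andP [a b]]|[_ ->]]] := refl_pos hp hp' h.
  by rewrite a ltnW.
by rewrite leq_addr leqnn.
Qed.

Lemma sj_sep p p' Y j1 j2 : j1 < j2 -> j1 < size Y ->
  sj p p' Y j1 + rr p p' (nth La Y j1) < sj p p' Y j2.
Proof.
move=> h hj; have := sj_mono p p' Y h; rewrite sj_next //; lia.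
Qed.

Lemma uniq_refl p p' Y : 0 < p -> 0 < p' -> uniq (reflections p p' Y).
Proof.
move=> hp hp'; rewrite /reflections map_inj_in_uniq ?uniq_co //.
move=> [j1 k1] [j2 k2] h1 h2 e.
have [hj1 c1] := refl_pos hp hp' h1.
have [hj2 c2] := refl_pos hp hp' h2.
have ej : j1 = j2.
  have b1 := refl_bounds hp hp' h1.
  have b2 := refl_bounds hp hp' h2.
  rewrite -e in b2.
  case: (ltngtP j1 j2) => // hlt.
  - have := sj_sep p p' hlt hj1. lia.
  - have := sj_sep p p' hlt hj2. lia.

subst j2.
rewrite e in c1.
case: c1 => [[? q1]|[? q1]]; case: c2 => [[? q2]|[? q2]]; subst; try done; lia.
Qed.

Lemma size_refl p p' Y : size (reflections p p' Y) = size (center_occs Y).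
Proof. by rewrite size_map. Qed.

Theorem lemma3 (px px' py py' : nat) (X Y Z : word) :
  0 < px -> 0 < px' -> 0 < py -> 0 < py' ->
  (* |px - px'| = 1 and |py - py'| = 1 *)
  (px = px'.+1 \/ px' = px.+1) -> (py = py'.+1 \/ py' = py.+1) ->
  X = alpha px px' Y -> Y = alpha py py' Z ->
  fin_sturmian X -> fin_sturmian Y ->
  n_original px px' Y =
    2 * (px - 1) * (nocc La Z * py + nocc Lb Z * py') + 2 * size Z * px'.
Proof.
move=> hp hp' hq hq' _ _ _ eY _ _.
rewrite /n_original count_notin ?uniq_co ?uniq_refl //; last first.
  move=> o /mapP [o' ho' ->]; exact: refl_in.
rewrite size_refl !size_co size_alpha aa_alpha.
have hsY := count_ab Y.
have hsZ := count_ab Z.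
rewrite -hsY; subst Y; rewrite aa_alpha !countLa_alpha !countLb_alpha /nocc -hsZ.
clear hsY hsZ; move: (count_mem La Z) (count_mem Lb Z) => a b.
case: px hp => [|u] // _; case: px' hp' => [|v] // _; case: py hq => [|w] // _; case: py' hq' => [|t] // _.
rewrite /= subn1 /=. nia.
Qed.
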